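(* Consider $P(\omega)$ with the Michael topology. If $\mathfrak{b}=\aleph_1$, then there is a subspace $X\subseteq P(\omega)$ which is a $\gamma$-space and is also a Michael space, i.e., $X$ is Lindelöf and $X\times\mathbb{P}$ is not Lindelöf, where $\mathbb{P}$ is the space of irrational numbers.
   Context: $P(\omega)$ is identified with the Cantor space $2^\omega$ via characteristic functions, giving the Cantor topology. The Michael topology on $P(\omega)$ is the finer topology obtained by additionally declaring every infinite subset of $\omega$ to be an isolated point. For $f,g\in\omega^\omega$, $f\le^* g$ means $f(n)\le g(n)$ for all but finitely many $n$; $\mathfrak{b}$ is the minimal cardinality of a subset of $\omega^\omega$ that is unbounded with respect to $\le^*$. An open cover $\mathcal{U}$ of a space $X$ is an $\omega$-cover if $X\notin\mathcal{U}$ and every finite subset of $X$ is included in some member of $\mathcal{U}$. A point-cofinite cover is an infinite open cover such that each point belongs to all but finitely many of its members. $X$ is a $\gamma$-space if every $\omega$-cover of $X$ includes a point-cofinite cover. *)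

(* Defs.v *)
From HB Require Import structures.
From mathcomp Require Import all_boot all_order all_algebra.
From mathcomp Require Import all_classical all_reals all_analysis.
Set Implicit Arguments. Unset Strict Implicit. Unset Printing Implicit Defensive.
Import Order.TTheory GRing.Theory Num.Theory.
Import numFieldNormedType.Exports.
Local Open Scope classical_set_scope.

(* P(omega) identified with characteristic functions nat -> bool. *)
Definition Pw := nat -> bool.

Definition infinite_pt (x : Pw) : Prop := ~ finite_set [set n | x n].

Definition cantor_open (U : set Pw) : Prop :=
  forall x, U x -> exists n : nat,
    forall y : Pw, (forall i, (i < n)%N -> y i = x i) -> U y.

(* Michael topology: generated by the Cantor open sets and the singletons of
   infinite subsets; its open sets are exactly V `|` A with V Cantor open and
   A a set of infinite subsets of omega. *)
Definition michael_open (U : set Pw) : Prop :=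
  exists V A : set Pw, cantor_open V /\ (forall x, A x -> infinite_pt x) /\
    U = V `|` A.

Definition rel_open {T} (op : set T -> Prop) (X U : set T) : Prop :=
  exists W, op W /\ U = X `&` W.

Definition omega_cover {T} (op : set T -> Prop) (X : set T)
    (C : set (set T)) : Prop :=
  (forall U, C U -> rel_open op X U) /\
  X `<=` \bigcup_(U in C) U /\
  ~ C X /\
  (forall F : set T, finite_set F -> F `<=` X -> exists2 U, C U & F `<=` U).

Definition point_cofinite_cover {T} (op : set T -> Prop) (X : set T)
    (C : set (set T)) : Prop :=
  (forall U, C U -> rel_open op X U) /\
  X `<=` \bigcup_(U in C) U /\
  ~ finite_set C /\
  (forall x, X x -> finite_set [set U | C U /\ ~ U x]).

Definition gamma_space {T} (op : set T -> Prop) (X : set T) : Prop :=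
  forall C, omega_cover op X C ->
    exists2 D, D `<=` C & point_cofinite_cover op X D.

Definition lindelof {T} (op : set T -> Prop) (X : set T) : Prop :=
  forall C : set (set T), (forall U, C U -> op U) ->
    X `<=` \bigcup_(U in C) U ->
    exists2 D, D `<=` C & countable D /\ X `<=` \bigcup_(U in D) U.

Definition prod_open {T1 T2} (op1 : set T1 -> Prop) (op2 : set T2 -> Prop)
    (W : set (T1 * T2)) : Prop :=
  forall z, W z -> exists U V, op1 U /\ op2 V /\ U z.1 /\ V z.2 /\
    U `*` V `<=` W.

Definition irrationals (R : realType) : set R :=
  [set x | forall q : rat, x <> ratr q].

Definition le_star (f g : nat -> nat) : Prop :=
  exists m, forall n, (m <= n)%N -> (f n <= g n)%N.

Definition unbounded_family (A : set (nat -> nat)) : Prop :=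
  ~ exists g, forall f, A f -> le_star f g.

(* |A| = aleph_1: A is uncountable and admits a well-ordering all of whose
   proper initial segments are countable. *)
Definition card_aleph1 {T} (A : set T) : Prop :=
  ~ countable A /\
  exists lt : T -> T -> Prop,
    (forall a, A a -> ~ lt a a) /\
    (forall a b c, A a -> A b -> A c -> lt a b -> lt b c -> lt a c) /\
    (forall a b, A a -> A b -> a = b \/ lt a b \/ lt b a) /\
    (forall B, B `<=` A -> B !=set0 ->
        exists2 m, B m & forall b, B b -> b <> m -> lt m b) /\
    (forall a, A a -> countable [set b | A b /\ lt b a]).

(* b = aleph_1: the least cardinality of a <=*-unbounded family is aleph_1,
   i.e. no family of cardinality < aleph_1 (= countable) is unbounded, and
   there is an unbounded family of cardinality aleph_1. *)
Definition b_eq_aleph1 : Prop :=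
  (forall A : set (nat -> nat), countable A -> ~ unbounded_family A) /\
  (exists A : set (nat -> nat), unbounded_family A /\ card_aleph1 A).

(* Main.v *)
Require Import Defs.
From HB Require Import structures.
From mathcomp Require Import all_boot all_order all_algebra.
From mathcomp Require Import all_classical all_reals all_analysis.
From mathcomp Require Import zify.
From Stdlib Require Import ClassicalEpsilon.
Import numFieldNormedType.Exports.
Set Implicit Arguments. Unset Strict Implicit. Unset Printing Implicit Defensive.
Local Open Scope classical_set_scope.
Definition eps {T} (d : T) (P : T -> Prop) : T := epsilon (inhabits d) P.
Lemma eps_spec {T} (d:T) (P : T -> Prop) : (exists x, P x) -> P (eps d P).
Proof. exact: epsilon_spec. Qed.

Definition inf (x : Pw) := forall n, exists m, (n <= m)%N /\ x m.
Definition sub_star (u v : Pw) := exists B, forall i, (B <= i)%N -> u i -> v i.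

Lemma sub_star_trans u v w : sub_star u v -> sub_star v w -> sub_star u w.
Proof.
move=> [B1 H1] [B2 H2]; exists (maxn B1 B2) => i Hi ui.
apply: H2; first lia. apply: H1 => //; lia.
Qed.

Lemma sub_star_inf u v : sub_star u v -> inf u -> inf v.
Proof.
move=> [B H] iu n; have [m [Hm um]] := iu (maxn n B).
exists m; split; first lia. apply: H => //; lia.
Qed.

Lemma finite_nat_bound (A : set nat) : finite_set A -> exists b, forall m, A m -> (m < b)%N.
Proof.
move=> /finite_seqP [s Hs]; exists (\max_(i <- s) i).+1 => m Am.
have ms : m \in s by have : A m by []; rewrite Hs.
by rewrite ltnS (leq_bigmax_seq m ms).
Qed.

Lemma bound_finite (A : set nat) b : (forall m, A m -> (m < b)%N) -> finite_set A.
Proof.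
move=> H; apply: (sub_finite_set (B := `I_b)) => // m /H.
Qed.

Lemma inf_infinite x : inf x <-> infinite_pt x.
Proof.
split.
- move=> ix /finite_nat_bound [b Hb].
  have [m [Hm xm]] := ix b. have := Hb m xm. lia.
- move=> ix n; apply: contrapT => H; apply: ix; apply: (bound_finite (b := n)) => m xm.
  rewrite ltnNge; apply/negP => Hm; apply: H; by exists m.
Qed.
Lemma count_enum T (Fam : set T) (u0 : T) : countable Fam -> Fam u0 ->
  exists z : nat -> T, (forall n, Fam (z n)) /\ (forall u, Fam u -> exists n, z n = u).
Proof.
move=> /countable_injP [f finj] Fu0.
pose z n := let c := eps u0 (fun u => Fam u /\ f u = n) in
            if `[< Fam c >] then c else u0.
exists z; split.
- move=> n; rewrite /z /=; case: ifPn => [/asboolP //|_]; exact: Fu0.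
- move=> u Fu; exists (f u); rewrite /z /=.
  have [H1 H2] : Fam (eps u0 (fun v => Fam v /\ f v = f u)) /\
                 f (eps u0 (fun v => Fam v /\ f v = f u)) = f u.
    by apply: (@eps_spec _ u0 (fun v => Fam v /\ f v = f u)); exists u.
  rewrite (asboolT H1); apply: finj; [exact/mem_set|exact/mem_set|exact: H2].
Qed.

Definition allb (z : nat -> Pw) (n : nat) : Pw := fun i => all (fun k => z k i) (iota 0 n.+1).

Lemma allbS z n i : allb z n.+1 i = allb z n i && z n.+1 i.
Proof. by rewrite /allb -[n.+2]addn1 iotaD all_cat /= andbT add0n. Qed.

Lemma pseudo_int (Fam : set Pw) : countable Fam -> (forall u, Fam u -> inf u) ->
  (forall u v, Fam u -> Fam v -> sub_star u v \/ sub_star v u) ->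
  exists p, inf p /\ forall u, Fam u -> sub_star p u.
Proof.
move=> cF iF chF.
case: (pselect (exists u, Fam u)) => [[u0 Fu0]|NF]; last first.
  exists (fun _ => true); split; first by move=> n; exists n.
  by move=> u Fu; exfalso; apply: NF; exists u.
have [z [zF zS]] := count_enum cF Fu0.
have Dsub : forall n, exists j, sub_star (z j) (allb z n).
  elim=> [|n [j [B Hj]]].
    exists 0%N; exists 0%N => i _ zi; by rewrite /allb /= zi.
  have [[B2 H2]|[B2 H2]] := chF _ _ (zF j) (zF n.+1).
  - exists j; exists (maxn B B2) => i Hi zi.
    rewrite allbS (Hj i (leq_trans (leq_maxl _ _) Hi) zi) H2 //; lia.
  - exists n.+1; exists (maxn B B2) => i Hi zi.
    rewrite allbS zi andbT.
    apply: Hj; first lia. apply: H2 => //; lia.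
have Dinf : forall n, inf (allb z n).
  move=> n; have [j Hj] := Dsub n; exact: sub_star_inf Hj (iF _ (zF j)).
pose pnext k t := eps 0%N (fun m => (t < m)%N /\ allb z k m).
have pnP : forall k t, (t < pnext k t)%N /\ allb z k (pnext k t).
  move=> k t; apply: (@eps_spec _ 0%N (fun m => (t < m)%N /\ allb z k m)); have [m [Hm Dm]] := Dinf k t.+1; by exists m.
pose ps := fix ps k := if k is k'.+1 then pnext k (ps k') else pnext 0%N 0%N.
have psS : forall k, (ps k < ps k.+1)%N by move=> k; exact: (pnP _ _).1.
have psD : forall k, allb z k (ps k) by case=> [|k]; exact: (pnP _ _).2.
have psM : {homo ps : i j / (i < j)%N >-> (i < j)%N}.
  by apply: homo_ltn => // ? ? ?; apply: ltn_trans.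
have psge : forall k, (k <= ps k)%N.
  elim=> [//|k IH]; have := psS k; lia.
exists (fun i => `[< exists k, ps k = i >]); split.
- move=> n; exists (ps n); split; first exact: psge.
  by apply/asboolP; exists n.
- move=> u /zS [n <-]; exists (ps n) => i Hi /asboolP [k Hk]; subst i.
  have kn : (n <= k)%N.
    rewrite leqNgt; apply/negP => /psM; lia.
  have := psD k; rewrite /allb => /allP; apply; rewrite mem_iota; lia.
Qed.
Definition nxt (p : Pw) (t : nat) : nat :=
  eps 0%N (fun m => (t < m)%N /\ p m /\ forall k, (t < k)%N -> p k -> (m <= k)%N).

Lemma nxt_spec p t : inf p ->
  (t < nxt p t)%N /\ p (nxt p t) /\ forall k, (t < k)%N -> p k -> (nxt p t <= k)%N.
Proof.
move=> ip; apply: (@eps_spec _ 0%N (fun m => (t < m)%N /\ p m /\ forall k, (t < k)%N -> p k -> (m <= k)%N)).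
have ex : exists m, (t < m)%N && p m.
  have [m [Hm pm]] := ip t.+1; exists m; rewrite pm andbT; lia.
case: (ex_minnP ex) => m /andP [H1 H2] H3; exists m; split=> //; split=> // k tk pk.
by apply: H3; rewrite tk pk.
Qed.

Definition xs (F : nat -> nat) (p : Pw) : nat -> nat :=
  fix xs i := if i is i'.+1 then nxt p (nxt p (F (xs i'))) else nxt p (nxt p 0%N).

Definition thin F p : Pw := fun n => `[< exists i, xs F p i = n >].

Section Thin.
Lemma xs_p F p i : inf p -> p (xs F p i).
Proof. by move=> ip; case: i => [|i] /=; exact: (nxt_spec _ ip).2.1. Qed.

Lemma xs_inc F p i : inf p -> (forall x, (x <= F x)%N) -> (xs F p i < xs F p i.+1)%N.
Proof.
move=> ip HF /=; have h1 := (nxt_spec (F (xs F p i)) ip).1.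
have h2 := (nxt_spec (nxt p (F (xs F p i))) ip).1.
have := HF (xs F p i); lia.
Qed.

Lemma xs_mono F p : inf p -> (forall x, (x <= F x)%N) ->
  {homo xs F p : i j / (i < j)%N >-> (i < j)%N}.
Proof.
move=> ip HF; apply: homo_ltn; first by move=> ? ? ?; apply: ltn_trans.
by move=> i; apply: xs_inc.
Qed.

Lemma xs_ge F p i : inf p -> (forall x, (x <= F x)%N) -> (i <= xs F p i)%N.
Proof.
move=> ip HF; elim: i => [//|i IH]; have := xs_inc i ip HF; lia.
Qed.

Lemma thin_sub F p n : inf p -> thin F p n -> p n.
Proof. by move=> ip /asboolP [i <-]; apply: xs_p. Qed.

Lemma thin_inf F p : inf p -> (forall x, (x <= F x)%N) -> inf (thin F p).
Proof.
move=> ip HF n; exists (xs F p n); split; first exact: xs_ge.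
by apply/asboolP; exists n.
Qed.

Lemma thin_gap F p x k : inf p -> (forall x, (x <= F x)%N) ->
  thin F p x -> (x < k)%N -> (k <= F x)%N -> ~~ thin F p k.
Proof.
move=> ip HF /asboolP [i <-] H1 H2; apply/negP => /asboolP [j Hj]; subst k.
have [ji|ij] := leqP j i.
  have : (xs F p j <= xs F p i)%N.
    move: ji; rewrite leq_eqVlt => /orP [/eqP -> //|/(xs_mono ip HF)]; lia.
  lia.
have : (xs F p i.+1 <= xs F p j)%N.
  move: ij; rewrite leq_eqVlt => /orP [/eqP -> //|/(xs_mono ip HF)]; lia.
have h1 := (nxt_spec (F (xs F p i)) ip).1.
have h2 := (nxt_spec (nxt p (F (xs F p i))) ip).1.
rewrite /=; lia.
Qed.

Lemma thin_skip F p : inf p -> (forall x, (x <= F x)%N) ->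
  forall n, exists m, (n <= m)%N /\ p m /\ ~~ thin F p m.
Proof.
move=> ip HF n; set s := nxt p (F (xs F p n)).
have [h1 [h2 _]] := nxt_spec (F (xs F p n)) ip.
have h3 := (nxt_spec s ip).1.
have h4 := HF (xs F p n). have h5 := xs_ge n ip HF.
exists s; split; first lia. split=> //.
apply/negP => /asboolP [j Hj].
have [jn|nj] := leqP j n.
  have : (xs F p j <= xs F p n)%N.
    move: jn; rewrite leq_eqVlt => /orP [/eqP -> //|/(xs_mono ip HF)]; lia.
  lia.
have : (xs F p n.+1 <= xs F p j)%N.
  move: nj; rewrite leq_eqVlt => /orP [/eqP -> //|/(xs_mono ip HF)]; lia.
rewrite /= -/s; lia.
Qed.
End Thin.
Record wo (A : set (nat -> nat)) (lt : (nat -> nat) -> (nat -> nat) -> Prop) : Prop := {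
  wo_irr : forall a, A a -> ~ lt a a;
  wo_tr : forall a b c, A a -> A b -> A c -> lt a b -> lt b c -> lt a c;
  wo_tot : forall a b, A a -> A b -> a = b \/ lt a b \/ lt b a;
  wo_min : forall B, B `<=` A -> B !=set0 -> exists2 m, B m & forall b, B b -> b <> m -> lt m b;
  wo_cnt : forall a, A a -> countable [set b | A b /\ lt b a] }.

Definition Rw (A : set (nat -> nat)) lt (b a : nat -> nat) := A b /\ A a /\ lt b a.

Lemma wfRw A lt : wo A lt -> well_founded (Rw A lt).
Proof.
move=> W a0; apply: contrapT => Na0.
have A0 : A a0.
  apply: contrapT => nA; apply: Na0; constructor => b [_ [H _]]; by [].
have [m [Am NAm] Hm] := wo_min W (B := [set a | A a /\ ~ Acc (Rw A lt) a])
  (fun a (H : A a /\ ~ Acc (Rw A lt) a) => proj1 H) (ex_intro _ a0 (conj A0 Na0)).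
apply: NAm; constructor => b [Ab [_ lbm]].
apply: contrapT => Nb; have := Hm b (conj Ab Nb) => H.
have bm : b <> m by move=> E; subst b; exact: (wo_irr W Am lbm).
exact: (wo_irr W Am (wo_tr W Am Ab Am (H bm) lbm)).
Qed.

Definition Fmaj (a : nat -> nat) (m : nat) : nat := m + \max_(i < m.+1) a i.

Lemma Fmaj_ge a m : (m <= Fmaj a m)%N. Proof. rewrite /Fmaj; lia. Qed.
Lemma Fmaj_gea a m : (a m <= Fmaj a m)%N.
Proof.
rewrite /Fmaj; have /= := @leq_bigmax _ (fun i : 'I_m.+1 => a i) (Ordinal (ltnSn m)); lia.
Qed.
Lemma Fmaj_mono a m n : (m <= n)%N -> (Fmaj a m <= Fmaj a n)%N.
Proof.
move=> mn; rewrite /Fmaj; apply: leq_add => //.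
apply/bigmax_leqP => i _.
have := @leq_bigmax _ (fun i : 'I_n.+1 => a i) (Ordinal (leq_trans (ltn_ord i) (mn : (m < n.+1)%N))). by [].
Qed.

Definition tstep A lt (a : nat -> nat) (prev : forall b, Rw A lt b a -> Pw) : Pw :=
  thin (Fmaj a) (eps (fun _ => true) (fun p => inf p /\ forall b (H : Rw A lt b a), sub_star p (prev b H))).

Definition tower A lt (W : wo A lt) : (nat -> nat) -> Pw :=
  Fix (wfRw W) (fun _ => Pw) (@tstep A lt).

Lemma tower_eq A lt (W : wo A lt) a :
  tower W a = thin (Fmaj a) (eps (fun _ => true)
     (fun p => inf p /\ forall b (H : Rw A lt b a), sub_star p (tower W b))).
Proof.
rewrite /tower Fix_eq // => x f g Hfg.
have -> : f = g by apply: functional_extensionality_dep => b;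
   apply: functional_extensionality_dep => H; exact: Hfg.
by [].
Qed.
Lemma sub_star_refl u : sub_star u u. Proof. by exists 0%N. Qed.

Lemma tower_spec A lt (W : wo A lt) : forall a, A a ->
  inf (tower W a) /\
  (forall x k, tower W a x -> (x < k)%N -> (k <= Fmaj a x)%N -> ~~ tower W a k) /\
  (forall b, A b -> lt b a -> sub_star (tower W a) (tower W b) /\ tower W a <> tower W b).
Proof.
move=> a; elim/(well_founded_ind (wfRw W)): a => a IH Aa.
set P := fun p => inf p /\ forall b (H : Rw A lt b a), sub_star p (tower W b).
have [ip Hp] : P (eps (fun _ => true) P).
  apply: eps_spec.
  pose Fam := [set u | exists b, (A b /\ lt b a) /\ u = tower W b].
  have cF : countable Fam.
    apply: (sub_countable _ (wo_cnt W Aa)).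
    apply: card_le_trans (card_image_le (tower W) _).
    by apply: subset_card_le => u [b [Hb ->]]; exists b.
  have iF : forall u, Fam u -> inf u.
    by move=> u [b [[Ab lba] ->]]; exact: (IH b (conj Ab (conj Aa lba)) Ab).1.
  have chF : forall u v, Fam u -> Fam v -> sub_star u v \/ sub_star v u.
    move=> u v [b [[Ab lba] ->]] [c [[Ac lca] ->]].
    case: (wo_tot W Ab Ac) => [->|[lbc|lcb]]; first by left; exact: sub_star_refl.
    + by right; exact: ((IH c (conj Ac (conj Aa lca)) Ac).2.2 b Ab lbc).1.
    + by left; exact: ((IH b (conj Ab (conj Aa lba)) Ab).2.2 c Ac lcb).1.
  have [p [ip Hp]] := pseudo_int cF iF chF.
  exists p; split=> // b [Ab [_ lba]]; apply: Hp; exists b; by split.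
rewrite tower_eq -/P; set p := eps _ P.
have HF := Fmaj_ge a.
split; first exact: thin_inf.
split; first by move=> x k; apply: thin_gap.
move=> b Ab lba; have Rba : Rw A lt b a by [].
split.
  apply: sub_star_trans (Hp b Rba); exists 0%N => i _; exact: thin_sub.
move=> E; have [B HB] := Hp b Rba; rewrite -E in HB.
have [m [Bm [pm nm]]] := thin_skip ip HF B.
by move: nm; rewrite HB.
Qed.
Definition misses (y : Pw) (g : nat -> nat) :=
  forall N, exists m, (N <= m)%N /\ forall i, (m <= i)%N -> (i < g m)%N -> ~~ y i.

Lemma tower_unb A lt (W : wo A lt) : unbounded_family A ->
  forall g : nat -> nat, exists a, A a /\ misses (tower W a) g.
Proof.
move=> U g; pose g' := Fmaj g; pose G m := g' (g' m).
have [a [Aa Na]] : exists a, A a /\ ~ le_star a G.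
  apply: contrapT => H; apply: U; exists G => f Af; apply: contrapT => Nf.
  by apply: H; exists f.
exists a; split=> // N.
have [n [Nn an]] : exists n, (N <= n)%N /\ (G n < a n)%N.
  apply: contrapT => H; apply: Na; exists N => n Nn; rewrite leqNgt; apply/negP => C.
  by apply: H; exists n.
have [_ [gap _]] := tower_spec W Aa.
case: (pselect (exists x, (n <= x)%N /\ (x < g' n)%N /\ tower W a x)) => [[x [nx [xg yx]]]|Nx].
- exists x.+1; split; first lia.
  move=> i xi ig; apply: (gap x) => //.
  have h1 : (g x.+1 <= g' x.+1)%N by exact: Fmaj_gea.
  have h2 : (g' x.+1 <= G n)%N by apply: Fmaj_mono.
  have h3 : (a n <= Fmaj a n)%N by exact: Fmaj_gea.
  have h4 : (Fmaj a n <= Fmaj a x)%N by apply: Fmaj_mono.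
  lia.
- exists n; split=> // i ni ig; apply/negP => yi; apply: Nx; exists i; split=> //.
  split=> //; have : (g n <= g' n)%N by exact: Fmaj_gea. lia.
Qed.
Record tspec A lt (y : (nat -> nat) -> Pw) : Prop := {
  ts_wo : wo A lt;
  ts_inf : forall a, A a -> inf (y a);
  ts_sub : forall a b, A a -> A b -> lt b a -> sub_star (y a) (y b);
  ts_inj : forall a b, A a -> A b -> y a = y b -> a = b;
  ts_unb : forall g, exists a, A a /\ misses (y a) g;
  ts_unc : ~ countable A }.

Lemma tspec_exists : b_eq_aleph1 -> exists A lt y, @tspec A lt y.
Proof.
move=> [_ [A [U [unc [lt [irr [tr [tot [mn cnt]]]]]]]]].
have W : wo A lt by split.
exists A, lt, (tower W); split=> //.
- by move=> a Aa; exact: (tower_spec W Aa).1.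
- by move=> a b Aa Ab lba; exact: ((tower_spec W Aa).2.2 b Ab lba).1.
- move=> a b Aa Ab E; case: (tot a b Aa Ab) => [//|[lab|lba]].
  + by case: ((tower_spec W Ab).2.2 a Aa lab).2.
  + by case: ((tower_spec W Aa).2.2 b Ab lba).2.
- exact: tower_unb.
Qed.

Lemma misses_sub u v g : sub_star u v -> misses v g -> misses u g.
Proof.
move=> [B HB] Mv N; have [m [Hm Hi]] := Mv (maxn N B); exists m; split; first lia.
move=> i mi ig; apply/negP => ui; have := Hi i mi ig; rewrite HB //; lia.
Qed.

Lemma misses_count A lt y (T : tspec A lt y) g :
  countable [set a | A a /\ ~ misses (y a) g].
Proof.
have W := ts_wo T.
have [a0 [Aa0 M0]] := ts_unb T g.
apply: (sub_countable _ (wo_cnt W Aa0)); apply: subset_card_le => a [Aa Na] /=.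
split=> //; case: (wo_tot W Aa Aa0) => [E|[//|la0a]]; first by subst a.
by exfalso; apply: Na; apply: misses_sub M0; exact: (ts_sub T).
Qed.

Definition toPw m (S : {set 'I_m}) : Pw :=
  fun n => if (insub n : option 'I_m) is Some i then i \in S else false.

Lemma toPw_lt m S n (H : (n < m)%N) : toPw S n = (Ordinal H \in S).
Proof. by rewrite /toPw insubT. Qed.

Lemma toPw_ge m (S : {set 'I_m}) n : (m <= n)%N -> toPw S n = false.
Proof. by move=> H; rewrite /toPw insubF // ltnNge H. Qed.

Lemma toPw_fin m (S : {set 'I_m}) : ~ infinite_pt (toPw S).
Proof.
move=> H; apply: H; apply: (bound_finite (b := m)) => n; rewrite /=.
by case: (ltnP n m) => // mn; rewrite toPw_ge.
Qed.

Lemma toPw_restr m (y : Pw) n : toPw [set i : 'I_m | y i] n = (n < m)%N && y n.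
Proof.
case: (ltnP n m) => H; first by rewrite (toPw_lt _ H) inE.
by rewrite toPw_ge.
Qed.

Definition nb (V : set Pw) (s : Pw) : nat :=
  eps 0%N (fun n => forall z : Pw, (forall i, (i < n)%N -> z i = s i) -> V z).

Lemma nb_spec V s : cantor_open V -> V s ->
  forall z : Pw, (forall i, (i < nb V s)%N -> z i = s i) -> V z.
Proof.
move=> CV Vs; apply: (@eps_spec _ 0%N (fun n => forall z : Pw, (forall i, (i < n)%N -> z i = s i) -> V z)).
have [n Hn] := CV s Vs; exists n => z Hz; apply: Hn => i Hi; exact: Hz.
Qed.

Definition hV (V : set Pw) (m : nat) : nat := \max_(S : {set 'I_m}) nb V (toPw S).

Lemma core V m (y : Pw) : cantor_open V -> (forall S : {set 'I_m}, V (toPw S)) ->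
  (forall i, (m <= i)%N -> (i < hV V m)%N -> ~~ y i) -> V y.
Proof.
move=> CV HS Hy; set S := [set i : 'I_m | y i]%SET.
have hle : (nb V (toPw S) <= hV V m)%N by exact: (leq_bigmax S).
apply: (nb_spec CV (HS S)) => i Hi; rewrite toPw_restr.
case: (ltnP i m) => im //=; apply/negbTE; apply: Hy => //; lia.
Qed.
Lemma countableU T (A B : set T) : countable A -> countable B -> countable (A `|` B).
Proof.
move=> cA cB.
have -> : A `|` B = \bigcup_(i in [set: bool]) (if i then A else B).
  apply/seteqP; split=> x.
  - by case=> H; [exists true|exists false].
  - by case=> [[]] _ H; [left|right].
apply: bigcup_countable => //; by case.
Qed.

Lemma countable_img T U (f : T -> U) (A : set T) : countable A -> countable (f @` A).
Proof. exact: sub_countable (card_image_le f A). Qed.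

Lemma fin_countable : countable [set x : Pw | ~ infinite_pt x].
Proof.
apply: (sub_countable (B := (fun s : seq nat => (fun n => n \in s) : Pw) @` setT)).
  apply: subset_card_le => x /= /contrapT /finite_seqP [s Hs]; exists s => //.
  apply: funext => n; apply/idP/idP => H.
  - have Hn : [set` s] n := H. by move: Hn; rewrite -Hs.
  - by have : [set n | x n] n by []; rewrite Hs.
exact: countable_img.
Qed.

Definition Xset (A : set (nat -> nat)) (y : (nat -> nat) -> Pw) : set Pw :=
  [set x | ~ infinite_pt x \/ exists2 a, A a & x = y a].

Lemma y_infinite A lt y (T : tspec A lt y) a : A a -> infinite_pt (y a).
Proof. by move=> Aa; apply/inf_infinite; exact: (ts_inf T). Qed.

Lemma michael_fin U s : michael_open U -> U s -> ~ infinite_pt s ->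
  exists V, cantor_open V /\ V s /\ V `<=` U.
Proof.
move=> [V [A' [CV [HA ->]]]] [Vs|As] Fs; last by case: Fs; apply: HA.
exists V; split=> //; split=> //; by move=> z Vz; left.
Qed.

Definition cpart (U : set Pw) : set Pw :=
  eps set0 (fun V => cantor_open V /\ exists A', (forall x, A' x -> infinite_pt x) /\ U = V `|` A').

Lemma cpart_spec U : michael_open U ->
  cantor_open (cpart U) /\ (forall s, U s -> ~ infinite_pt s -> cpart U s) /\ cpart U `<=` U.
Proof.
move=> MU.
have [CV [A' [HA E]]] : cantor_open (cpart U) /\ exists A', (forall x, A' x -> infinite_pt x) /\ U = cpart U `|` A'.
  apply: (@eps_spec _ set0 (fun V => cantor_open V /\ exists A', (forall x, A' x -> infinite_pt x) /\ U = V `|` A')).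
  by move: MU => [V [A' [C1 [C2 C3]]]]; exists V; split=> //; exists A'.
split=> //; split.
- move=> s; rewrite {1}E => -[//|As] Fs; by case: Fs; apply: HA.
- by move=> z Vz; rewrite E; left.
Qed.

Lemma lindelof_X A lt y (T : tspec A lt y) : lindelof michael_open (Xset A y).
Proof.
move=> C HC Cov.
pose Ux (x : Pw) := eps set0 (fun U => C U /\ U x).
have UxP : forall x, Xset A y x -> C (Ux x) /\ Ux x x.
  move=> x Xx; apply: (@eps_spec _ set0 (fun U => C U /\ U x)).
  by have [U CU Ux'] := Cov x Xx; exists U.
pose V := [set z | exists s, ~ infinite_pt s /\ cpart (Ux s) z].
have XF : forall s, ~ infinite_pt s -> Xset A y s by move=> s Fs; left.
have CV : cantor_open V.
  move=> z [s [Fs Hz]]; have [C1 _] := cpart_spec (HC _ (UxP s (XF s Fs)).1).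
  have [n Hn] := C1 z Hz; exists n => w Hw; exists s; split=> //; exact: Hn.
have VF : forall m (S : {set 'I_m}), V (toPw S).
  move=> m S; exists (toPw S); split; first exact: toPw_fin.
  have [_ [C2 _]] := cpart_spec (HC _ (UxP _ (XF _ ((@toPw_fin m S)))).1).
  apply: C2; [exact: (UxP _ (XF _ ((@toPw_fin m S)))).2|exact: toPw_fin].
pose Bad := [set a | A a /\ ~ V (y a)].
have cBad : countable Bad.
  apply: (sub_countable _ (misses_count T (hV V))); apply: subset_card_le.
  move=> a [Aa NV]; split=> // M; apply: NV.
  have [m [_ Hm]] := M 0%N; exact: (core CV (VF m) Hm).
exists (Ux @` ([set x : Pw | ~ infinite_pt x] `|` y @` Bad)).
  move=> U [x Hx <-]; apply: (UxP x _).1; case: Hx => [Fx|[a [Aa _] <-]]; [by left|by right; exists a].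
split; first by apply: countable_img; apply: countableU; [exact: fin_countable|exact: countable_img].
move=> x Xx; case: (pselect (infinite_pt x)) => [Ix|Fx].
- case: (Xx) => [//|[a Aa Ex]].
  case: (pselect (V x)) => [[s [Fs Vs]]|NV].
  + exists (Ux s); first by exists s => //; left.
    have [_ [_ C3]] := cpart_spec (HC _ (UxP s (XF s Fs)).1); exact: C3.
  + exists (Ux x); last exact: (UxP x Xx).2.
    by exists x => //; right; exists a => //; split=> //; rewrite -Ex.
- exists (Ux x); last exact: (UxP x Xx).2.
  by exists x => //; left.
Qed.
Definition Eset (zeta : nat -> Pw) m : set Pw :=
  (zeta @` [set i | (i <= m)%N]) `|` ((@toPw m) @` [set: {set 'I_m}]).

Definition Uc (C : set (set Pw)) zeta m : set Pw :=
  eps set0 (fun U => C U /\ Eset zeta m `<=` U).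

Definition Wpart (X U : set Pw) : set Pw :=
  eps set0 (fun W => michael_open W /\ U = X `&` W).

Definition hh X C zeta m := hV (cpart (Wpart X (Uc C zeta m))) m.

Lemma Eset_fin zeta m : finite_set (Eset zeta m).
Proof.
rewrite /Eset finite_setU; split; apply: finite_image => //.
by apply: (bound_finite (b := m.+1)) => i /=.
Qed.

Lemma Uc_spec X C zeta m : omega_cover michael_open X C ->
  (forall i, X (zeta i)) -> (forall x, ~ infinite_pt x -> X x) ->
  C (Uc C zeta m) /\ Eset zeta m `<=` Uc C zeta m /\
  (forall x, X x -> (forall i, (m <= i)%N -> (i < hh X C zeta m)%N -> ~~ x i) -> Uc C zeta m x).
Proof.
move=> [HC [_ [_ HF]]] Xz XF.
have [CU EU] : C (Uc C zeta m) /\ Eset zeta m `<=` Uc C zeta m.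
  apply: (@eps_spec _ set0 (fun U => C U /\ Eset zeta m `<=` U)).
  have EX : Eset zeta m `<=` X.
    by move=> x [[i _ <-]|[S0 _ <-]]; [exact: Xz|exact: XF (@toPw_fin m S0)].
  have [U CU FU] := HF (Eset zeta m) (Eset_fin zeta m) EX.
  by exists U.
split=> //; split=> // x Xx Hx.
set U := Uc C zeta m.
have [MW EW] : michael_open (Wpart X U) /\ U = X `&` Wpart X U.
  apply: (@eps_spec _ set0 (fun W => michael_open W /\ U = X `&` W)).
  exact: HC.
have [CV [Cfin Csub]] := cpart_spec MW.
have VS : forall S : {set 'I_m}, cpart (Wpart X U) (toPw S).
  move=> S; apply: Cfin; last exact: toPw_fin.
  have : U (toPw S) by apply: EU; right; exists S.
  by rewrite {1}EW => -[].
rewrite EW; split=> //; apply: Csub; exact: (core CV VS Hx).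
Qed.
Definition a_of (X : set Pw) C A (y : (nat -> nat) -> Pw) (zeta : nat -> Pw) : nat -> nat :=
  eps (fun _ => 0%N) (fun a => A a /\ misses (y a) (hh X C zeta)).

Definition Nset A (lt : (nat -> nat) -> (nat -> nat) -> Prop) (y : (nat -> nat) -> Pw) a : set Pw :=
  [set x | exists b, (b = a \/ lt b a) /\ A b /\ x = y b].

Definition enum_of (Fam : set Pw) (u0 : Pw) : nat -> Pw :=
  eps (fun _ => u0) (fun z => (forall n, Fam (z n)) /\ forall u, Fam u -> exists n, z n = u).

Lemma enum_of_spec Fam u0 : countable Fam -> Fam u0 ->
  (forall n, Fam (enum_of Fam u0 n)) /\ forall u, Fam u -> exists n, enum_of Fam u0 n = u.
Proof.
move=> cF Fu0; apply: (@eps_spec _ (fun _ => u0) (fun z => (forall n, Fam (z n)) /\ forall u, Fam u -> exists n, z n = u)).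
exact: count_enum cF Fu0.
Qed.

Definition nextz X C A lt y (zeta : nat -> Pw) : nat -> Pw :=
  let a := a_of X C A y zeta in
  let nu := enum_of (Nset A lt y a) (y a) in
  fun n => if odd n then nu n./2 else zeta n./2.

Definition zeta_k X C A lt y (k : nat) : nat -> Pw :=
  iter k (nextz X C A lt y) (fun _ _ => false).

Lemma zeta_double X C A lt y k i : zeta_k X C A lt y k.+1 i.*2 = zeta_k X C A lt y k i.
Proof. by rewrite /zeta_k iterS /nextz /= odd_double doubleK. Qed.

Lemma zeta_odd X C A lt y k i : zeta_k X C A lt y k.+1 i.*2.+1 =
  enum_of (Nset A lt y (a_of X C A y (zeta_k X C A lt y k))) (y (a_of X C A y (zeta_k X C A lt y k))) i.
Proof. by rewrite /zeta_k iterS /nextz /= odd_double /= uphalf_double. Qed.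

Lemma zeta_shift X C A lt y k t i : zeta_k X C A lt y (k + t) (i * 2 ^ t) = zeta_k X C A lt y k i.
Proof.
elim: t => [|t IH]; first by rewrite addn0 expn0 muln1.
by rewrite addnS expnS mulnCA mul2n zeta_double IH.
Qed.
Lemma gamma_X A lt y (T : tspec A lt y) : gamma_space michael_open (Xset A y).
Proof.
move=> C OC; set X := Xset A y.
have W := ts_wo T.
have XF : forall x, ~ infinite_pt x -> X x by move=> x H; left.
have [HC [_ [NCX _]]] := OC.
pose z := zeta_k X C A lt y.
pose a k := a_of X C A y (z k).
have aP : forall zeta, A (a_of X C A y zeta) /\ misses (y (a_of X C A y zeta)) (hh X C zeta).
  move=> zeta; apply: (@eps_spec _ (fun _ => 0%N) (fun a => A a /\ misses (y a) (hh X C zeta))).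
  exact: (ts_unb T).
have NsetP : forall b, A b -> countable (Nset A lt y b) /\ Nset A lt y b (y b).
  move=> b Ab; split; last by exists b; split; [left|split].
  apply: (sub_countable (B := y @` ([set b] `|` [set c | A c /\ lt c b]))).
    apply: subset_card_le => u [c [Hc [Ac ->]]]; exists c => //.
    by case: Hc => [->|lcb]; [left|right].
  by apply: countable_img; apply: countableU => //; exact: (wo_cnt W Ab).
have NX : forall b u, Nset A lt y b u -> X u.
  by move=> b u [c [_ [Ac ->]]]; right; exists c.
have zX : forall k i, X (z k i).
  elim=> [|k IH] i.
    apply: XF => H; apply: H; exact: (bound_finite (b := 0%N)).
  rewrite /z /zeta_k iterS /nextz /=; case: ifP => _; last exact: IH.
  set b := a_of _ _ _ _ _.
  have [Ab _] := aP (iter k (nextz X C A lt y) (fun=> fun=> false)).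
  exact: (NX _ _ ((enum_of_spec (NsetP b Ab).1 (NsetP b Ab).2).1 _)).
pose I := [set b | A b /\ exists k, b = a k \/ lt b (a k)].
have cI : countable I.
  apply: (sub_countable (B := \bigcup_(k in [set: nat]) ([set a k] `|` [set b | A b /\ lt b (a k)]))).
    apply: subset_card_le => b [Ab [k [->|lb]]]; exists k => //; [by left|by right].
  apply: bigcup_countable => // k _; apply: countableU => //.
  exact: (wo_cnt W (aP (z k)).1).
have [d [Ad NId] Hd] : exists2 d, [set b | A b /\ ~ I b] d &
    forall b, [set b | A b /\ ~ I b] b -> b <> d -> lt d b.
  apply: (wo_min W) => [b [] //|].
  apply: contrapT => H; apply: (ts_unc T); apply: (sub_countable _ cI).
  apply: subset_card_le => b Ab; apply: contrapT => Nb; apply: H; by exists b.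
have ltad : forall k, lt (a k) d.
  move=> k; case: (wo_tot W (aP (z k)).1 Ad) => [E|[//|lda]].
  - by case: NId; split=> //; exists k; left.
  - by case: NId; split=> //; exists k; right.
pose Bd k := eps 0%N (fun B => forall i, (B <= i)%N -> y d i -> y (a k) i).
have BdP : forall k i, (Bd k <= i)%N -> y d i -> y (a k) i.
  move=> k; apply: (@eps_spec _ 0%N (fun B => forall i, (B <= i)%N -> y d i -> y (a k) i)).
  exact: (ts_sub T Ad (aP (z k)).1 (ltad k)).
pose mk k := eps 0%N (fun m => (k * 2 ^ k <= m)%N /\ (Bd k <= m)%N /\
   forall i, (m <= i)%N -> (i < hh X C (z k) m)%N -> ~~ y (a k) i).
have mkP : forall k, (k * 2 ^ k <= mk k)%N /\ (Bd k <= mk k)%N /\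
   forall i, (mk k <= i)%N -> (i < hh X C (z k) (mk k))%N -> ~~ y (a k) i.
  move=> k; apply: (@eps_spec _ 0%N (fun m => (k * 2 ^ k <= m)%N /\ (Bd k <= m)%N /\
   forall i, (m <= i)%N -> (i < hh X C (z k) m)%N -> ~~ y (a k) i)).
  have [m [Hm Hi]] := (aP (z k)).2 (maxn (k * 2 ^ k) (Bd k)).
  exists m; split; first lia. split; first lia. exact: Hi.
have mk_ge : forall k, (k <= mk k)%N.
  move=> k; apply: leq_trans (mkP k).1; exact: leq_pmulr (expn_gt0 2 k).
pose Dk k := Uc C (z k) (mk k).
have DkP : forall k, C (Dk k) /\ Eset (z k) (mk k) `<=` Dk k /\
  (forall x, X x -> (forall i, (mk k <= i)%N -> (i < hh X C (z k) (mk k))%N -> ~~ x i) -> Dk k x).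
  by move=> k; apply: Uc_spec.
have main : forall x, X x -> exists K, forall k, (K <= k)%N -> Dk k x.
  move=> x Xx; case: (Xx) => [Fx|[b Ab ->]].
  - have [bd Hbd] := finite_nat_bound (contrapT Fx).
    exists bd => k Kk; apply: (DkP k).2.2 => // i mi _; apply/negP => xi.
    have := Hbd i xi; have := mk_ge k; lia.
  - case: (pselect (I b)) => [[_ [k0 Hk0]]|NIb].
    + have Nb : Nset A lt y (a k0) (y b) by exists b; split; [exact: Hk0|split].
      have [Ab0 _] := aP (z k0).
      have [n Hn] := (enum_of_spec (NsetP _ Ab0).1 (NsetP _ Ab0).2).2 _ Nb.
      exists (k0.+1 + n.*2.+1)%N => k Kk.
      have [t Ht] : exists t, k = (k0.+1 + t)%N by exists (k - k0.+1)%N; lia.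
      apply: (DkP k).2.1; left; exists (n.*2.+1 * 2 ^ t)%N.
        rewrite /=; apply: leq_trans (mkP k).1; apply: leq_mul; first lia.
        rewrite leq_exp2l //; lia.
      by rewrite Ht /z zeta_shift zeta_odd Hn.
    + have Sb : sub_star (y b) (y d).
        case: (pselect (b = d)) => [->|nbd]; first exact: sub_star_refl.
        exact: (ts_sub T Ab Ad (Hd b (conj Ab NIb) nbd)).
      have [B HB] := Sb.
      exists B => k Kk; apply: (DkP k).2.2; first by right; exists b.
      move=> i mi ih; apply/negP => yi.
      have h1 := mk_ge k. have [_ [h2 h3]] := mkP k.
      have := h3 i mi ih; rewrite (BdP k i) //; last by apply: HB => //; lia.
      lia.
have CX : forall U, C U -> U `<=` X.
  move=> U /HC [W0 [_ ->]]; by move=> u [].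
have outP : forall U, C U -> exists x, X x /\ ~ U x.
  move=> U CU; apply: contrapT => H; apply: NCX.
  have E : X = U.
    apply/seteqP; split; last exact: CX.
    move=> x Xx; apply: contrapT => NU; apply: H; by exists x.
  by move: CU; rewrite -E.
exists [set U | exists k, U = Dk k].
  by move=> U [k ->]; exact: (DkP k).1.
split; first by move=> U [k ->]; exact: HC (DkP k).1.
split.
  move=> x Xx; have [K HK] := main x Xx; exists (Dk K); [by exists K|exact: HK].
split.
  move=> FD.
  pose xo U := eps (fun _ => false) (fun x => X x /\ ~ U x).
  have xoP : forall U, C U -> X (xo U) /\ ~ U (xo U).
    move=> U CU; exact: (@eps_spec _ (fun _ => false) (fun x => X x /\ ~ U x) (outP U CU)).
  pose Ko U := eps 0%N (fun K => forall k, (K <= k)%N -> Dk k (xo U)).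
  have KoP : forall U, C U -> forall k, (Ko U <= k)%N -> Dk k (xo U).
    move=> U CU; apply: (@eps_spec _ 0%N (fun K => forall k, (K <= k)%N -> Dk k (xo U))).
    exact: main (xoP U CU).1.
  have [Kb HKb] := finite_nat_bound (finite_image Ko FD).
  have DK : [set U | exists k, U = Dk k] (Dk Kb) by exists Kb.
  have CK := (DkP Kb).1.
  apply: (xoP _ CK).2; apply: KoP => //.
  have := HKb (Ko (Dk Kb)) (ex_intro2 _ _ (Dk Kb) DK erefl); lia.
move=> x Xx; have [K HK] := main x Xx.
apply: (sub_finite_set (B := Dk @` [set k | (k < K)%N])).
  move=> U [[k ->] NU]; exists k => //=; rewrite ltnNge; apply/negP => Kk; exact: NU (HK k Kk).
apply: finite_image; exact: (bound_finite (b := K)).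
Qed.
From mathcomp Require Import ring lra.
Import Order.TTheory GRing.Theory Num.Theory.
Local Open Scope ring_scope.

Definition wt {R : realType} (c : nat) : R := ((2 ^ c)%N%:R)^-1.

Lemma wt_gt0 {R : realType} c : 0 < @wt R c.
Proof. by rewrite /wt invr_gt0 ltr0n expn_gt0. Qed.

Lemma wt_le {R : realType} c d : (c <= d)%N -> @wt R d <= wt c.
Proof.
move=> cd; rewrite /wt lef_pV2 ?posrE ?ltr0n ?expn_gt0 // ler_nat leq_exp2l //.
Qed.

Lemma wt_S {R : realType} c : 2 * @wt R c.+1 = wt c.
Proof.
rewrite /wt expnS natrM invfM mulrA mulfV ?mul1r //; by rewrite pnatr_eq0.
Qed.

Lemma ratr_wt {R : realType} c : @wt R c = ratr ((2 ^ c)%N%:R^-1).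
Proof. by rewrite /wt fmorphV rmorph_nat. Qed.

Lemma wt_small {R : realType} (e : R) : 0 < e -> exists C, @wt R C < e.
Proof.
move=> e0; set C := Num.Def.archi_bound (e^-1); exists C.
have h1 : e^-1 < C%:R by apply: archi_boundP; rewrite invr_ge0 ltW.
have h2 : (C%:R : R) <= (2 ^ C)%N%:R by rewrite ler_nat ltnW // ltn_expl.
rewrite /wt -[e]invrK ltf_pV2 ?posrE ?ltr0n ?expn_gt0 ?invr_gt0 //.
exact: lt_le_trans h1 h2.
Qed.
Definition irr {R : realType} (r : R) := forall q : rat, r <> ratr q.

Definition Gset {R : realType} k : set R :=
  [set g | exists s : seq nat, (size s <= k)%N /\ g = \sum_(c <- s) wt c].

Lemma irr_sub {R : realType} (r : R) c : irr r -> irr (r - wt c).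
Proof.
move=> H q E; apply: (H (q + (2 ^ c)%N%:R^-1)); rewrite rmorphD fmorphV rmorph_nat.
by apply/eqP; rewrite -subr_eq; apply/eqP; exact: E.
Qed.

Lemma G_avoid {R : realType} k : forall r : R, irr r ->
  exists2 e : R, 0 < e & forall g, Gset k g -> e <= `|r - g|.
Proof.
elim: k => [|k IH] r Hr.
  exists `|r|.
    rewrite normr_gt0; apply/negP => /eqP E; apply: (Hr 0); by rewrite E rmorph0.
  move=> g [s [Hs ->]]; move: Hs; rewrite leqn0 => /nilP ->; by rewrite big_nil subr0.
have [e0 e0p H0] := IH r Hr.
have [C HC] := @wt_small R (e0 / 2) ltac:(lra).
have Hc : forall C', exists2 e : R, 0 < e & forall c, (c <= C')%N ->
    forall g, Gset k g -> e <= `|r - wt c - g|.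
  elim=> [|C' [e1 e1p H1]].
    have [e1 e1p H1] := IH _ (irr_sub (c := 0%N) Hr).
    by exists e1 => // c; rewrite leqn0 => /eqP ->.
  have [e2 e2p H2] := IH _ (irr_sub (c := C'.+1) Hr).
  exists (Order.min e1 e2); first by rewrite lt_min e1p e2p.
  move=> c; rewrite leq_eqVlt => /orP [/eqP ->|cC] g Gg.
  + by apply: (le_trans _ (H2 g Gg)); rewrite ge_min lexx orbT.
  + by apply: (le_trans _ (H1 c cC g Gg)); rewrite ge_min lexx.
have [e1 e1p H1] := Hc C.
exists (Order.min (e0 / 2) e1); first by rewrite lt_min e1p andbT; lra.
move=> g [[|c s] [Hs ->]].
  rewrite big_nil; have G0 : Gset k (0 : R) by exists [::]; split=> //; rewrite big_nil.
  apply: (le_trans _ (H0 0 G0)); rewrite ge_min; apply/orP; left; lra.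
rewrite big_cons; have Gs : @Gset R k (\sum_(c0 <- s) wt c0) by exists s.
have [cC|Cc] := leqP c C.
  rewrite opprD addrA; have := H1 c cC _ Gs.
  have : Order.min (e0 / 2) e1 <= e1 by rewrite ge_min lexx orbT.
  exact: le_trans.
apply: (@le_trans _ _ (e0 / 2)); first by rewrite ge_min; apply/orP; left.
have h1 := H0 _ Gs.
have h2 : (wt c : R) <= wt C by apply: wt_le; exact: ltnW.
have h3 := ler_normD (r - (wt c + \sum_(c <- s) wt c)) (wt c : R).
have h4 : r - (wt c + \sum_(c <- s) wt c) + (wt c : R) = r - \sum_(c <- s) wt c.
  lra.
rewrite h4 (ger0_norm (ltW (@wt_gt0 R c))) in h3.
lra.
Qed.
Definition cnt (z : Pw) (N : nat) : nat := (\sum_(0 <= i < N) (z i : nat))%N.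

Lemma cnt_split z N M : (N <= M)%N -> cnt z M = (cnt z N + \sum_(N <= i < M) (z i : nat))%N.
Proof. by move=> NM; rewrite /cnt (@big_cat_nat _ _ _ N 0 M) //. Qed.

Lemma cnt_mono z N M : (N <= M)%N -> (cnt z N <= cnt z M)%N.
Proof. by move=> NM; rewrite (cnt_split z NM) leq_addr. Qed.

Lemma cnt_S z N : cnt z N.+1 = (cnt z N + z N)%N.
Proof. by rewrite /cnt big_nat_recr. Qed.

Lemma cnt_inf z : inf z -> forall k, exists N, (k < cnt z N)%N.
Proof.
move=> iz; elim=> [|k [N HN]].
  have [m [_ zm]] := iz 0%N; exists m.+1; rewrite cnt_S zm; lia.
have [m [Nm zm]] := iz N; exists m.+1; rewrite cnt_S zm.
have := cnt_mono z Nm; lia.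
Qed.

Definition Tk (z : Pw) (k : nat) : nat :=
  eps 0%N (fun t => forall N, (cnt z N <= k)%N -> (2 * N.+1 <= 2 ^ t)%N).

Lemma Tk_spec z k : inf z -> forall N, (cnt z N <= k)%N -> (2 * N.+1 <= 2 ^ Tk z k)%N.
Proof.
move=> iz; apply: (@eps_spec _ 0%N (fun t => forall N, (cnt z N <= k)%N -> (2 * N.+1 <= 2 ^ t)%N)).
have [N0 HN0] := cnt_inf iz k.
exists N0.+1 => N HN.
have NN0 : (N < N0)%N.
  rewrite ltnNge; apply/negP => /(cnt_mono z); lia.
have := ltn_expl N0 (ltnSn 1); rewrite expnS; lia.
Qed.

Fixpoint cs (z : Pw) (j : nat) : nat :=
  if j is j'.+1 then (cs z j' + j' + 2 + Tk z j)%N else Tk z 0.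

Lemma cs_T z j : (Tk z j <= cs z j)%N.
Proof. case: j => [//|j] /=; lia. Qed.

Lemma cs_step z j : (cs z j + j + 2 <= cs z j.+1)%N.
Proof. rewrite /=; lia. Qed.

Lemma cs_mono z i j : (i <= j)%N -> (cs z i <= cs z j)%N.
Proof.
move=> /subnK <-; elim: (j - i)%N => [//|d IH].
rewrite addSn; have := cs_step z (d + i); lia.
Qed.


Definition Ssum {R : realType} (z : Pw) (j : nat) : R := \sum_(i < j) wt (cs z i).
Definition rr {R : realType} (z : Pw) : R := sup (range (@Ssum R z)).

Lemma Ssum_S {R : realType} z j : @Ssum R z j.+1 = Ssum z j + wt (cs z j).
Proof. by rewrite /Ssum big_ord_recr. Qed.

Lemma wt_half {R : realType} z i : 2 * @wt R (cs z i.+1) <= wt (cs z i).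
Proof.
rewrite -(@wt_S R (cs z i)) ler_pM2l ?ltr0n //; apply: wt_le; have := cs_step z i; lia.
Qed.

Lemma Ssum_tail {R : realType} z j n :
  @Ssum R z (j + n) + 2 * wt (cs z (j + n)) <= Ssum z j + 2 * wt (cs z j).
Proof.
elim: n => [|n IH]; first by rewrite addn0.
rewrite addnS Ssum_S; have := @wt_half R z (j + n); lra.
Qed.

Lemma Ssum_mono {R : realType} z j n : (j <= n)%N -> @Ssum R z j <= Ssum z n.
Proof.
move=> /subnK <-; elim: (n - j)%N => [|d IH]; first by rewrite add0n.
rewrite addSn Ssum_S; have := @wt_gt0 R (cs z (d + j)); lra.
Qed.

Lemma Ssum_ub {R : realType} z j n : @Ssum R z n <= Ssum z j + 2 * wt (cs z j).
Proof.
have w0 := @wt_gt0 R (cs z j).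
have [jn|nj] := leqP j n.
  have := @Ssum_tail R z j (n - j); rewrite subnKC //.
  have := @wt_gt0 R (cs z n); lra.
have := @Ssum_mono R z n j (ltnW nj); lra.
Qed.

Lemma rr_ge {R : realType} z n : @Ssum R z n <= rr z.
Proof.
apply: (sup_upper_bound); last by exists n.
split; first by exists (Ssum z 0); exists 0%N.
exists (Ssum z 0 + 2 * wt (cs z 0)) => _ [m _ <-]; exact: Ssum_ub.
Qed.

Lemma rr_le {R : realType} z j : @rr R z <= Ssum z j + 2 * wt (cs z j).
Proof.
apply: ge_sup; first by exists (Ssum z 0); exists 0%N.
move=> _ [m _ <-]; exact: Ssum_ub.
Qed.

Lemma Ssum_G {R : realType} z k : Gset k (@Ssum R z k).
Proof.
exists [seq cs z i | i <- iota 0 k]; rewrite size_map size_iota; split=> //.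
by rewrite big_map /Ssum -(big_mkord xpredT (fun i => wt (cs z i))) /index_iota subn0.
Qed.

Lemma rr_Q {R : realType} z : inf z -> forall N, exists2 g : R, Gset (cnt z N) g &
   (`|@rr R z - g| * N.+1%:R <= 1)%R.
Proof.
move=> iz N; set k := cnt z N; exists (Ssum z k); first exact: Ssum_G.
have h1 := @rr_le R z k. have h2 := @rr_ge R z k.
have h3 : (2 * N.+1 <= 2 ^ cs z k)%N.
  apply: leq_trans (Tk_spec iz (leqnn k)) _; rewrite leq_exp2l //; exact: cs_T.
have h4 : (2 * N.+1)%:R <= ((2 ^ cs z k)%N%:R : R) by rewrite ler_nat.
have h5 : ((2 ^ cs z k)%N%:R : R) * wt (cs z k) = 1 by rewrite /wt mulfV // pnatr_eq0 expn_eq0.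
have w0 := @wt_gt0 R (cs z k).
rewrite ger0_norm; last lra.
rewrite natrM in h4.
have h6 := ler_wpM2r (ltW w0) h4; rewrite h5 in h6.
have hN : (0 : R) <= N.+1%:R by [].
nra.
Qed.
Lemma pow_wt {R : realType} a b : (a <= b)%N -> ((2 ^ b)%N%:R : R) * wt a = (2 ^ (b - a))%N%:R.
Proof.
move=> ab; rewrite -{1}(subnK ab) expnD natrM /wt -mulrA mulfV ?mulr1 //.
Qed.

Lemma wtD {R : realType} a b : @wt R (a + b) = wt a * wt b.
Proof. by rewrite /wt expnD natrM invfM. Qed.

Lemma rr_irr {R : realType} z : inf z -> irr (@rr R z).
Proof.
move=> iz q E.
have [j dE] : exists j : nat, denq q = j%:Z.
  case Ed: (denq q) => [j|j]; first by exists j.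
  by have := denq_gt0 q; rewrite Ed.
have j0 : (0 < j)%N by have := denq_gt0 q; rewrite dE.
have Eq : @rr R z * j%:R = (numq q)%:~R.
  have H := congr1 (@ratr R) (numqE q); rewrite ratr_int rmorphM rmorph_int dE in H.
  by rewrite H E.
set c := cs z j; set c' := cs z j.+1.
have hc : (c + j.+2 <= c')%N by have := cs_step z j; rewrite /c /c'; lia.
set E' : R := (2 ^ c)%N%:R * j%:R * (rr z - Ssum z j.+1).
have w0 := @wt_gt0 R c'.
have pos : 0 < E'.
  have h := @rr_ge R z j.+2; rewrite Ssum_S in h.
  rewrite /E' mulr_gt0 // ?mulr_gt0 ?ltr0n ?expn_gt0 //; lra.
have up : E' < 1.
  have h1 := @rr_le R z j.+1; rewrite -/c' in h1.
  have h2 : @wt R c' <= wt c * wt j.+2 by rewrite -wtD; apply: wt_le.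
  have h3 : (2 ^ c)%N%:R * @wt R c = 1 by rewrite /wt mulfV // pnatr_eq0 expn_eq0.
  have h4 : 2 * @wt R j.+2 = wt j.+1 by rewrite wt_S.
  have h5 : (j%:R : R) * wt j.+1 < 1.
    have h3' : (2 ^ j.+1)%N%:R * @wt R j.+1 = 1 by rewrite /wt mulfV // pnatr_eq0 expn_eq0.
    have hh : (j%:R : R) < (2 ^ j.+1)%N%:R.
      rewrite ltr_nat; apply: (leq_trans (ltn_expl j (ltnSn 1))); rewrite leq_exp2l //.
    have := @wt_gt0 R j.+1; nra.
  have p2 : (0 : R) < (2 ^ c)%N%:R by rewrite ltr0n expn_gt0.
  have pj : (0 : R) < j%:R by rewrite ltr0n.
  have wc := @wt_gt0 R c. have wj := @wt_gt0 R j.+2.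
  have : E' <= (2 ^ c)%N%:R * j%:R * (2 * (wt c * wt j.+2)).
    rewrite /E' ler_pM2l ?mulr_gt0 //; lra.
  have -> : (2 ^ c)%N%:R * j%:R * (2 * (wt c * wt j.+2)) =
            ((2 ^ c)%N%:R * @wt R c) * (j%:R * (2 * wt j.+2)) by ring.
  rewrite h3 h4 mul1r; lra.
pose z0 : int := ((2 ^ c)%N%:Z * numq q - (j * \sum_(i < j.+1) 2 ^ (c - cs z i))%N%:Z)%R.
have Ez : E' = z0%:~R.
  rewrite /z0 intrB intrM -Eq.
  have hs : (2 ^ c)%N%:R * Ssum z j.+1 = ((\sum_(i < j.+1) 2 ^ (c - cs z i))%N%:R : R).
    rewrite /Ssum mulr_sumr natr_sum; apply: eq_bigr => i _; apply: pow_wt.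
    apply: cs_mono; have := ltn_ord i; lia.
  rewrite /E'.
  have -> : ((2 ^ c)%N%:Z%:~R : R) = (2 ^ c)%N%:R by [].
  have -> : ((j * \sum_(i < j.+1) 2 ^ (c - cs z i))%N%:Z%:~R : R) =
      (j * \sum_(i < j.+1) 2 ^ (c - cs z i))%N%:R by [].
  rewrite natrM -hs; ring.
move: pos up; rewrite Ez ltr0z ltrz1; lia.
Qed.
Lemma cnt_agree (z x : Pw) N : (forall i, (i < N)%N -> z i = x i) -> cnt z N = cnt x N.
Proof.
move=> H; rewrite /cnt; apply: eq_big_nat => i /andP [_ iN]; by rewrite H.
Qed.

Lemma cnt_stable (x : Pw) n0 N : (forall i, x i -> (i < n0)%N) -> (n0 <= N)%N ->
  cnt x N = cnt x n0.
Proof.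
move=> Hb nN; rewrite (cnt_split x nN) big1_seq ?addn0 // => i /andP [_].
rewrite mem_index_iota => /andP [n0i _].
case E: (x i) => //; have := Hb i E; lia.
Qed.

Lemma prod_X A lt y (T : tspec A lt y) (R : realType) :
  ~ lindelof (prod_open michael_open (@open R)) (Xset A y `*` @irrationals R).
Proof.
move=> L.
pose rv a : R := rr (y a).
pose Dset := [set w : (Pw * R)%type | exists2 a, A a & w = (y a, rv a)].
pose W0 := [set w : (Pw * R)%type | exists U V, michael_open U /\ open V /\ U w.1 /\ V w.2 /\
   (forall w', U w'.1 -> V w'.2 -> ~ Dset w')].
pose Sb a := [set w : (Pw * R)%type | w.1 = y a].
pose Cov := [set W0] `|` [set S | exists2 a, A a & S = Sb a].
have CovO : forall S, Cov S -> prod_open michael_open (@open R) S.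
  move=> S [->|[a Aa ->]].
  - move=> w [U [V [MU [OV [Uw [Vw H]]]]]]; exists U, V; do 4! (split=> //).
    move=> w' [U1 V1]; exists U, V; do 4! (split=> //).
  - move=> w Sw; exists [set y a], setT; split.
      exists set0, [set y a]; split; first by move=> ? [].
      split; first by move=> x /= ->; apply: (y_infinite T Aa).
      by rewrite set0U.
    split; first exact: openT.
    split; first by [].
    split=> //; by move=> w' [H _].
have CovC : Xset A y `*` @irrationals R `<=` \bigcup_(S in Cov) S.
  move=> [x r] H; case: H => /= Xx Pr.
  case: Xx => [Fx|[a Aa ->]]; last by exists (Sb a) => //; right; exists a.
  exists W0; first by left.
  have [n0 Hn0] := finite_nat_bound (contrapT Fx).
  set k := cnt x n0.
  have [e e0 He] := G_avoid k Pr.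
  set N := maxn n0 (Num.Def.archi_bound (2 / e)).
  have hN : 2 / e < N.+1%:R.
    apply: (lt_le_trans (archi_boundP _)); first by apply: divr_ge0 => //; exact: ltW.
    by rewrite ler_nat; lia.
  have hNe : 2 < N.+1%:R * e.
    by rewrite -ltr_pdivrMr //.
  exists [set z : Pw | forall i, (i < N)%N -> z i = x i], (ball r (e / 2)).
  split.
    exists [set z : Pw | forall i, (i < N)%N -> z i = x i], set0; split.
      move=> z Hz; exists N => z' Hz' i iN; rewrite Hz' //; exact: Hz.
    split; first by move=> ?.
    by rewrite setU0.
  split; first exact: ball_open.
  split; first by [].
  split; first by apply: ballxx; lra.
  move=> [z t] /= Uz Vt [a Aa [Ez Et]]; subst z t.
  have iya : inf (y a) := ts_inf T Aa.
  have [g Gg Hg] := @rr_Q R _ iya N.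
  have ck : cnt (y a) N = k.
    rewrite (cnt_agree Uz) /k; apply: cnt_stable => //; lia.
  rewrite ck in Gg.
  have h1 := He g Gg.
  move: Vt; rewrite -ball_normE /= => h2.
  have h3 := ler_distD (rv a) r g.
  have h4 : 0 <= `|rv a - g| by [].
  have h5 : 0 < N.+1%:R :> R by rewrite ltr0n.
  rewrite -/(rv a) in Hg.
  nra.
have [D DC [cD DCov]] := L Cov CovO CovC.
have DSb : forall a, A a -> D (Sb a).
  move=> a Aa.
  have XP : (Xset A y `*` @irrationals R) (y a, rv a).
    split; first by right; exists a.
    exact: rr_irr (ts_inf T Aa).
  have [S DS Sw] := DCov _ XP.
  case: (DC S DS) => [E|[a' Aa' E]].
    rewrite /= in E; subst S.
    move: Sw => [U [V [_ [_ [Uw [Vw H]]]]]]; by case: (H _ Uw Vw); exists a.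
  subst S; rewrite /Sb /= in Sw.
  by rewrite (ts_inj T Aa Aa' Sw).
apply: (ts_unc T).
move/countable_injP: cD => [f finj]; apply/countable_injP.
exists (fun a => f (Sb a)) => a b /set_mem Aa /set_mem Ab E.
have E2 : Sb a = Sb b by apply: finj => //; apply/mem_set; exact: DSb.
have : Sb b (y a, 0) by rewrite -E2.
by rewrite /Sb /= => /(ts_inj T Aa Ab).
Qed.
Local Close Scope ring_scope.

Theorem theorem4p6 (R : realType) :
  b_eq_aleph1 ->
  exists X : set Pw,
    gamma_space michael_open X /\
    lindelof michael_open X /\
    ~ lindelof (prod_open michael_open (@open R)) (X `*` @irrationals R).
Proof.
move=> H; have [A [lt [y T]]] := tspec_exists H.
exists (Xset A y); split; first exact: gamma_X T.
split; first exact: lindelof_X T.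
exact: prod_X T R.
Qed.
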